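(* Let $\Delta \ge 1$ and $\alpha > \Delta$ be integers. There is an infinite family of graphs of maximum degree $\Delta$ and an absolute constant $C>0$ such that for every graph $G=(V,E)$ in the family and every assignment of nonempty sets $L(v) \subseteq \{1,\dots,\alpha\}$ to the vertices $v\in V$ with the property that every choice of one color $\ell_v \in L(v)$ for each $v \in V$ yields a proper $\alpha$-coloring of $G$, we have $\min_{v\in V}|L(v)| \le C\alpha/\Delta$, i.e. the solution domain has size $O(\alpha/\Delta)$. Consequently the contingency factor $\alpha/\min_{v}|L(v)|$ is $\Omega(\Delta)$.
   Context: A proper $\alpha$-coloring of a graph $G=(V,E)$ is a map $\varphi:V\to\{1,\dots,\alpha\}$ with $\varphi(u)\neq\varphi(v)$ for every edge $\{u,v\}\in E$. A ''generic algorithm'' for $\alpha$-coloring outputs for every vertex $v$ a set $L(v)$ of candidate colors such that any selection of one color from each set is a proper $\alpha$-coloring; the vertex then privately picks one of its candidates at random. The size of the problem domain is $\alpha$ (the number of available labels), the size of the solution domain is $k=\min_v |L(v)|$, and the contingency factor is $\alpha/k$. *)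

(* Defs.v *)
From mathcomp Require Import all_boot all_order all_algebra.
Set Implicit Arguments. Unset Strict Implicit. Unset Printing Implicit Defensive.

Record sgraph := SGraph {
  nv : nat;
  adj : rel 'I_nv;
  adj_sym : symmetric adj;
  adj_irr : irreflexive adj }.

Definition deg (G : sgraph) (v : 'I_(nv G)) : nat := #|[set u | adj v u]|.

Definition max_deg (G : sgraph) : nat := \max_(v : 'I_(nv G)) deg v.

(* proper alpha-coloring, colors are 'I_alpha (i.e. {1..alpha} shifted by one) *)
Definition proper_coloring (G : sgraph) (alpha : nat) (phi : 'I_(nv G) -> 'I_alpha) :=
  forall u v, adj u v -> phi u != phi v.

(* Output of a generic algorithm for alpha-coloring: nonempty candidate sets
   such that every selection of one candidate per vertex is a proper coloring. *)
Definition generic_lists (G : sgraph) (alpha : nat) (L : 'I_(nv G) -> {set 'I_alpha}) :=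
  (forall v, L v != set0) /\
  (forall phi : 'I_(nv G) -> 'I_alpha, (forall v, phi v \in L v) -> proper_coloring phi).

(* Main.v *)
Require Import Defs.
From mathcomp Require Import all_boot all_order all_algebra.
Import Order.TTheory GRing.Theory Num.Theory.
Local Open Scope ring_scope.

Lemma sum_disj (T : finType) (I : finType) (r : seq I) (A : I -> {set T}) :
  uniq r -> {in r &, forall i j, i != j -> [disjoint A i & A j]} ->
  (\sum_(i <- r) #|A i| = #|\bigcup_(i <- r) A i|)%N.
Proof.
elim: r => [|x r IH] /=; first by rewrite !big_nil cards0.
move=> /andP [xr ur] H.
rewrite !big_cons IH //; last by move=> i j ir jr; apply: H; rewrite inE ?ir ?jr orbT.
rewrite cardsU.
suff -> : A x :&: \bigcup_(i <- r) A i = set0 by rewrite cards0 subn0.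
apply: disjoint_setI0; rewrite bigcup_seq; apply/bigcup_disjointP => j jr.
apply: H; rewrite ?inE ?eqxx ?jr ?orbT //.
by apply/eqP => E; rewrite E jr in xr.
Qed.

Section G.
Variables (D k : nat).
Definition nG := (D.+1 + k)%N.
Definition wS (i : 'I_D.+1) : 'I_nG := widen_ord (leq_addr k D.+1) i.
Definition S : {set 'I_nG} := [set wS i | i : 'I_D.+1].
Definition adjG : rel 'I_nG := fun u v => [&& u != v, u \in S & v \in S].
Lemma adjG_sym : symmetric adjG.
Proof. by move=> u v; rewrite /adjG eq_sym; case: (u \in S); case: (v \in S); rewrite ?andbF. Qed.
Lemma adjG_irr : irreflexive adjG.
Proof. by move=> u; rewrite /adjG eqxx. Qed.
Definition GG := SGraph adjG_sym adjG_irr.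

Lemma wS_inj : injective wS.
Proof. by move=> i j /(congr1 val) /= /val_inj. Qed.
Lemma cardS : #|S| = D.+1.
Proof. by rewrite card_imset ?card_ord //; apply: wS_inj. Qed.

Lemma maxdegG : max_deg GG = D.
Proof.
apply/eqP; rewrite eqn_leq; apply/andP; split.
  apply/bigmax_leqP => v _; rewrite /deg /=.
  case vS: (v \in S).
    have -> : [set u | adjG v u] = S :\ v.
      by apply/setP => u; rewrite !inE /adjG vS /= eq_sym.
    by move: (cardsD1 v S); rewrite vS cardS add1n => -[<-].
  have -> : [set u | adjG v u] = set0.
    by apply/setP => u; rewrite !inE /adjG vS /= andbF.
  by rewrite cards0.
have v0S : wS ord0 \in S by apply: imset_f.
have Hm := @leq_bigmax 'I_(nv GG) (fun v => @deg GG v) (wS (@ord0 D)).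
suff h : (D <= @deg GG (wS ord0))%N by exact: leq_trans h Hm.
rewrite /deg /=.
have -> : [set u | adjG (wS ord0) u] = S :\ wS ord0.
  by apply/setP => u; rewrite !inE /adjG v0S /= eq_sym.
by move: (cardsD1 (wS ord0) S); rewrite v0S cardS add1n => -[<-].
Qed.
End G.

Theorem theorem1 :
  exists C : rat, 0 < C /\
  forall Delta alpha : nat, (1 <= Delta)%N -> (Delta < alpha)%N ->
  exists F : nat -> sgraph,
    injective (fun k => nv (F k)) /\
    (forall k, max_deg (F k) = Delta) /\
    (forall k (L : 'I_(nv (F k)) -> {set 'I_alpha}),
       generic_lists L ->
       exists v : 'I_(nv (F k)),
         (#|L v|%:R : rat) <= C * alpha%:R / Delta%:R).
Proof.
exists 1; split => // D a D1 Da.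
exists (GG D); split; first by move=> k1 k2 /= /eqP; rewrite /nG eqn_add2l => /eqP.
split; first by move=> k; apply: maxdegG.
move=> k L [Lne Lpr].
pose f i := L (wS D k i).
have disj : forall i j, i != j -> [disjoint f i & f j].
  move=> i j ij; rewrite -setI_eq0; apply/set0Pn => -[c]; rewrite inE => /andP [ci cj]; exfalso.
  pose phi x := if (x == wS D k i) || (x == wS D k j) then c else odflt c [pick y in L x].
  have Hphi : forall v, phi v \in L v.
    move=> v; rewrite /phi; case: eqP => [->//|_]; case: eqP => [->//|_] /=.
    case: pickP => //= /eq_card0 H0; by move: (Lne v); rewrite -cards_eq0 /= H0.
  have := Lpr phi Hphi (wS D k i) (wS D k j).
  have ijS : adjG D k (wS D k i) (wS D k j).
    rewrite /adjG !imset_f // andbT.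
    by rewrite andbT; apply: contra ij => /eqP /wS_inj ->.
  by move/(_ ijS); rewrite /phi !eqxx /= orbT eqxx.
have Hsum : (\sum_(i : 'I_D.+1) #|f i| <= a)%N.
  rewrite sum_disj ?index_enum_uniq //.
    by apply: leq_trans (max_card _) _; rewrite card_ord.
  by move=> i j _ _; apply: disj.
case: (arg_minnP (fun i => #|f i|) (isT : predT ord0)) => i0 _ Hmin.
exists (wS D k i0).
have Dpos : (0 : rat) < D%:R by rewrite ltr0n.
rewrite mul1r ler_pdivlMr // -natrM ler_nat.
apply: (leq_trans _ Hsum).
have Hs : (\sum_(i < D.+1) #|f i0| <= \sum_(i < D.+1) #|f i|)%N.
  by apply: leq_sum => i _; apply: Hmin.
apply: (leq_trans _ Hs).
rewrite big_const_ord iter_addn_0.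
by apply: leq_mul.
Qed.
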